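(* Let $S$ be a basis of $\mathcal{M}$ with $\det(V_SV_S^\top)>0$ and let $C$ be a minimal $f$-violating cycle in $G(S)$. Then $C$ contains at most one arc of type $\mathrm{II}$.
   Context: Let $v_1,\ldots,v_n\in\mathbb{R}^d$ and $\mathcal{M}=([n],\mathcal{I})$ a matroid; a basis is an independent set of maximum size. For $S\subseteq[n]$, $V_S$ is the $d\times|S|$ matrix with columns $v_i$, $i\in S$; elements are identified with their vectors, and $S-v+u=(S\setminus\{v\})\cup\{u\}$. For a basis $S$ with $\det(V_SV_S^\top)>0$ put $\langle u,v\rangle_S=u^\top(V_SV_S^\top)^{-1}v$, $\|u\|_S^2=\langle u,u\rangle_S$. The exchange graph $G(S)$ is the directed bipartite multigraph on $[n]$ with parts $S$ and $[n]\setminus S$: for $v\in S$, $u\notin S$ there is a backward arc $v\to u$ of weight $0$ whenever $S-v+u\in\mathcal{I}$; for $u\notin S$, $v\in S$ with $S-v+u$ spanning $\mathbb{R}^d$ there are two forward arcs, of type $\mathrm{I}$: $u\xrightarrow{\mathrm{I}}v$ with weight $-\log|\langle u,v\rangle_S|$, and of type $\mathrm{II}$: $u\xrightarrow{\mathrm{II}}v$ with weight $-\log\sqrt{(1+\|u\|_S^2)(1-\|v\|_S^2)}$ (with $-\log 0=+\infty$). For a directed cycle $C$ in $G(S)$, $|C|$ is its number of arcs, $\mathrm{ver}(C)$ its vertex set, and $w(C)$ the sum of its arc weights. Let $f(1)=2$ and $f(i)=(i!)^{11}$ for $i\geq 2$. A cycle $C$ is $f$-violating if $w(C)<-\log f(|C|/2)$;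 it is minimal $f$-violating if it is $f$-violating and no cycle $C'$ in $G(S)$ with $\mathrm{ver}(C')\subsetneq\mathrm{ver}(C)$ is $f$-violating. *)

(* Defs.v *)
From HB Require Import structures.
From mathcomp Require Import all_boot all_order all_algebra.
From mathcomp Require Import reals ereal sequences exp.
Set Implicit Arguments. Unset Strict Implicit. Unset Printing Implicit Defensive.
Import Order.TTheory GRing.Theory Num.Theory.
Local Open Scope ring_scope.

Definition is_matroid (n : nat) (indep : {set 'I_n} -> bool) : Prop :=
  [/\ indep set0,
      (forall A B : {set 'I_n}, A \subset B -> indep B -> indep A) &
      (forall A B : {set 'I_n}, indep A -> indep B -> (#|A| < #|B|)%N ->
         exists2 x, x \in B :\: A & indep (x |: A))].

Definition is_basis (n : nat) (indep : {set 'I_n} -> bool) (S : {set 'I_n}) : Prop :=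
  indep S /\ forall T : {set 'I_n}, indep T -> (#|T| <= #|S|)%N.

Section Exchange.
Variables (R : realType) (d n : nat) (v : 'I_n -> 'cV[R]_d)
          (indep : {set 'I_n} -> bool) (S : {set 'I_n}).

Definition Vmat (T : {set 'I_n}) : 'M[R]_(d, #|T|) :=
  \matrix_(r < d, j < #|T|) v (enum_val j) r ord0.

Definition gram : 'M[R]_d := Vmat S *m (Vmat S)^T.

Definition ipS (x y : 'cV[R]_d) : R := (x^T *m invmx gram *m y) ord0 ord0.
Definition nrm2S (x : 'cV[R]_d) : R := ipS x x.

Definition exch (a b : 'I_n) : {set 'I_n} := b |: (S :\ a).

Definition spans (T : {set 'I_n}) : bool := \rank (Vmat T) == d.

Definition neglog (x : R) : \bar R := if x <= 0 then +oo%E else (- ln x)%:E.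

Inductive earc : Type :=
  | Back of 'I_n & 'I_n      (* Back a b  : a -> b,  a in S, b notin S *)
  | FwdI of 'I_n & 'I_n      (* FwdI b a  : b -I-> a, b notin S, a in S *)
  | FwdII of 'I_n & 'I_n.    (* FwdII b a : b -II-> a *)

Definition src (e : earc) : 'I_n :=
  match e with Back a _ => a | FwdI b _ => b | FwdII b _ => b end.
Definition tgt (e : earc) : 'I_n :=
  match e with Back _ b => b | FwdI _ a => a | FwdII _ a => a end.

Definition is_typeII (e : earc) : bool :=
  match e with FwdII _ _ => true | _ => false end.

Definition arc_in_G (e : earc) : bool :=
  match e with
  | Back a b => [&& a \in S, b \notin S & indep (exch a b)]
  | FwdI b a => [&& b \notin S, a \in S & spans (exch a b)]
  | FwdII b a => [&& b \notin S, a \in S & spans (exch a b)]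
  end.

Definition arc_weight (e : earc) : \bar R :=
  match e with
  | Back _ _ => 0%E
  | FwdI b a => neglog `|ipS (v b) (v a)|
  | FwdII b a => neglog (Num.sqrt ((1 + nrm2S (v b)) * (1 - nrm2S (v a))))
  end.

Definition consecutive : rel earc := fun e1 e2 => tgt e1 == src e2.

Definition is_cycle (c : seq earc) : bool :=
  [&& (0 < size c)%N, all arc_in_G c, cycle consecutive c & uniq (map src c)].

Definition ver (c : seq earc) : {set 'I_n} := [set x | x \in map src c].

Definition cweight (c : seq earc) : \bar R := (\sum_(e <- c) arc_weight e)%E.

Definition fval (i : nat) : R := if i == 1%N then 2 else ((i`!) ^ 11)%:R.

(* |C|/2 : cycles in the bipartite graph G(S) have even length *)
Definition f_violating (c : seq earc) : Prop :=
  is_cycle c /\ (cweight c < (- ln (fval (size c)./2))%:E)%E.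

Definition min_f_violating (c : seq earc) : Prop :=
  f_violating c /\
  forall c' : seq earc, is_cycle c' -> ver c' \proper ver c -> not (f_violating c').

End Exchange.

(* Main.v *)
Require Import Defs.
From HB Require Import structures.
From mathcomp Require Import all_boot all_order all_algebra.
From mathcomp Require Import reals ereal sequences exp.
Import Order.TTheory GRing.Theory Num.Theory.
Local Open Scope ring_scope.
Set Implicit Arguments. Unset Strict Implicit. Unset Printing Implicit Defensive.

Section LA.
Variables (R : realType) (d n : nat) (v : 'I_n -> 'cV[R]_d) (S : {set 'I_n}).

Lemma gram_sum : gram v S = \sum_(i in S) v i *m (v i)^T.
Proof.
apply/matrixP => r c; rewrite summxE !mxE [RHS](big_enum_val (A := mem S)).
apply: eq_bigr => j _; rewrite !mxE big_ord1 !mxE; done.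
Qed.

Lemma colV (T : {set 'I_n}) j : col j (Vmat v T) = v (enum_val j).
Proof. by apply/matrixP => r c; rewrite !mxE (ord1 c). Qed.

Lemma ker_lemma (T : {set 'I_n}) : ~~ spans v T ->
  exists2 y : 'rV[R]_d, y != 0 & forall i, i \in T -> y *m v i = 0.
Proof.
rewrite /spans => Hs.
have Hlt : (\rank (Vmat v T) < d)%N.
  by rewrite ltn_neqAle Hs rank_leq_row.
set K := kermx (Vmat v T).
have HK : K != 0.
  by rewrite -mxrank_eq0 mxrank_ker subn_eq0 -ltnNge.
case: (pickP (fun i => row i K != 0)) => [i Hi|H0]; last first.
  case/eqP: HK; apply/row_matrixP => i; rewrite row0.
  by move/negbFE: (H0 i) => /eqP.
exists (row i K) => // j Hj.
have E : row i K *m Vmat v T = 0 by rewrite -row_mul mulmx_ker row0.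
have := congr1 (col (enum_rank_in Hj j)) E.
by rewrite col0 colE -mulmxA -colE colV enum_rankK_in.
Qed.

Hypothesis Hu : gram v S \in unitmx.

Lemma gram_sym : (gram v S)^T = gram v S.
Proof. by rewrite /gram trmx_mul trmxK. Qed.

Lemma entry11 (m : nat) (A : 'M[R]_(1, m)) : (A *m A^T) 0 0 = \sum_k A 0 k ^+ 2.
Proof. by rewrite !mxE; apply: eq_bigr => k _; rewrite !mxE expr2. Qed.

Lemma nrm2S_ge0 x : 0 <= nrm2S v S x.
Proof.
rewrite /nrm2S /ipS.
set G := gram v S.
set z := invmx G *m x.
have Hx : x = G *m z by rewrite /z mulKVmx.
have -> : x^T *m invmx G *m x = z^T *m G *m z.
  by rewrite -mulmxA -/z {1}Hx trmx_mul gram_sym.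
clearbody z; rewrite /G gram_sum mulmx_sumr mulmx_suml summxE; apply: sumr_ge0 => i _.
have -> : z^T *m (v i *m (v i)^T) *m z = (z^T *m v i) *m (z^T *m v i)^T.
  by rewrite trmx_mul trmxK !mulmxA.
by rewrite entry11; apply: sumr_ge0 => k _; apply: sqr_ge0.
Qed.

Lemma lev1 a (y : 'rV[R]_d) : a \in S -> y != 0 ->
  (forall i, i \in S -> i != a -> y *m v i = 0) -> nrm2S v S (v a) = 1.
Proof.
move=> Ha Hy H0.
set G := gram v S.
have E : y *m G = (y *m v a) *m (v a)^T.
  rewrite /G gram_sum mulmx_sumr (bigD1 a) //= big1 ?addr0 ?mulmxA // => i /andP[Hi Hia].
  by rewrite mulmxA H0 // mul0mx.
set c := y *m v a.
have Hc : c != 0.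
  apply: contraNneq Hy => Hc0.
  by rewrite -(mulmxK Hu y) -/G E -/c Hc0 !mul0mx.
have Hy' : y = c *m (v a)^T *m invmx G by rewrite -E mulmxK.
have Ec : c = c *m ((v a)^T *m invmx G *m v a).
  by rewrite {1}/c {1}Hy' !mulmxA.
have Hc00 : c 0 0 != 0.
  apply: contra_neq Hc => H; apply/matrixP => i j; by rewrite (ord1 i) (ord1 j) H mxE.
have := congr1 (fun M : 'M[R]_1 => M 0 0) Ec => /=.
rewrite [X in _ = X]mxE big_ord1 => /esym /eqP.
rewrite -{2}(mulr1 (c 0 0)) (inj_eq (mulfI Hc00)) => /eqP.
done.
Qed.

End LA.
Section EX.
Variable R : realType.

Lemma neglog_nninf (x : R) : neglog x != -oo%E.
Proof. by rewrite /neglog; case: ifP. Qed.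

Lemma neglog_pos (x : R) : 0 < x -> neglog x = (- ln x)%:E.
Proof. by move=> Hx; rewrite /neglog lt_geF. Qed.

Lemma neglog_le0 (x : R) : x <= 0 -> neglog x = +oo%E.
Proof. by move=> Hx; rewrite /neglog Hx. Qed.

Lemma lnsqrt (a b : R) : 0 < a -> 0 < b ->
  ln (Num.sqrt a) + ln (Num.sqrt b) = ln (Num.sqrt (a * b)).
Proof.
move=> Ha Hb; rewrite sqrtrM ?ltW // lnM // posrE sqrtr_gt0 //.
Qed.

Lemma swap_id (p1 p2 q1 q2 : R) : 0 < p1 -> 0 < p2 ->
  (neglog (Num.sqrt (p1 * q1)) + neglog (Num.sqrt (p2 * q2)) =
   neglog (Num.sqrt (p1 * q2)) + neglog (Num.sqrt (p2 * q1)))%E.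
Proof.
move=> H1 H2.
case: (lerP q1 0) => Hq1.
  rewrite (@neglog_le0 (Num.sqrt (p1 * q1))); last by rewrite ler0_sqrtr // pmulr_rle0.
  rewrite (@neglog_le0 (Num.sqrt (p2 * q1))); last by rewrite ler0_sqrtr // pmulr_rle0.
  by rewrite addye ?neglog_nninf // addey ?neglog_nninf.
case: (lerP q2 0) => Hq2.
  rewrite (@neglog_le0 (Num.sqrt (p2 * q2))); last by rewrite ler0_sqrtr // pmulr_rle0.
  rewrite (@neglog_le0 (Num.sqrt (p1 * q2))); last by rewrite ler0_sqrtr // pmulr_rle0.
  by rewrite addey ?neglog_nninf // addye ?neglog_nninf.
rewrite !neglog_pos ?sqrtr_gt0 ?mulr_gt0 // -!EFinD -!opprD !lnsqrt ?mulr_gt0 //.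
by rewrite mulrACA [q1 * _]mulrC [in RHS]mulrACA.
Qed.

Lemma rearr (a1 a2 b1 b2 sP sQ : \bar R) : (a1 + a2 = b1 + b2 ->
  (b1 + sQ) + (b2 + sP) = a1 + (sP + (a2 + sQ)))%E.
Proof.
move=> H; rewrite addeACA -H -addeA; congr (_ + _)%E.
by rewrite [RHS]addeC -addeA [(sQ + _)%E]addeC.
Qed.

End EX.
Definition gnat (i : nat) : nat := if i == 1%N then 2%N else (i`! ^ 11)%N.

Lemma gnat_gt0 i : (0 < gnat i)%N.
Proof. by rewrite /gnat; case: eqP => // _; rewrite expn_gt0 fact_gt0. Qed.

Lemma fact_mul a b : (a`! * b`! <= (a + b)`!)%N.
Proof.
have := bin_fact (leq_addr b a); rewrite addKn => <-.
by rewrite leq_pmull // bin_gt0 leq_addr.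
Qed.

Lemma gnat_1b b : (2 * gnat b.+2 <= gnat b.+3)%N.
Proof.
rewrite /gnat /= (factS b.+2) expnMn leq_mul2r; apply/orP; right.
by rewrite (leq_trans _ (leq_pexp2l _ (isT : (0 < 11)%N))) ?expn1.
Qed.

Lemma gnat_sup a b : (gnat a * gnat b <= gnat (a + b))%N.
Proof.
case: a => [|[|a]]; first by rewrite /gnat /= mul1n.
- case: b => [|[|b]]; first by rewrite /gnat /= muln1.
  + by [].
  + by rewrite add1n gnat_1b.
- case: b => [|[|b]]; first by rewrite /gnat /= muln1 addn0.
  + by rewrite mulnC addn1 gnat_1b.
  + rewrite /gnat /= addnS addSn /= -expnMn leq_exp2r //.
    by apply: leq_trans (fact_mul _ _) _; rewrite !addnS !addSn.
Qed.

Lemma gnat_mono a b : (a <= b)%N -> (gnat a <= gnat b)%N.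
Proof.
move=> Hab; rewrite -(subnKC Hab).
apply: leq_trans (gnat_sup _ _); by rewrite leq_pmulr ?gnat_gt0.
Qed.

Lemma fval_nat (R : realType) i : fval R i = (gnat i)%:R.
Proof. by rewrite /fval /gnat; case: eqP. Qed.

Lemma final_contra (R : realType) (x1 x2 : \bar R) k1 k2 k :
  (k1 + k2 <= k)%N ->
  ((- ln (fval R k1))%:E <= x1)%E -> ((- ln (fval R k2))%:E <= x2)%E ->
  (x1 + x2 < (- ln (fval R k))%:E)%E -> False.
Proof.
move=> Hk H1 H2 H.
have := le_lt_trans (leeD H1 H2) H; rewrite -EFinD lte_fin -opprD ltrN2.
rewrite !fval_nat -lnM ?posrE ?ltr0n ?gnat_gt0 // -natrM.
rewrite ltNge ler_ln ?posrE ?ltr0n ?muln_gt0 ?gnat_gt0 // ler_nat.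
by rewrite (leq_trans (gnat_sup _ _)) // gnat_mono.
Qed.

Unset Implicit Arguments.
Section Core.
Variables (R : realType) (d n : nat) (v : 'I_n -> 'cV[R]_d)
          (indep : {set 'I_n} -> bool) (S : {set 'I_n}).
Hypothesis Hu : gram v S \in unitmx.

Lemma adde_nninf (x y : \bar R) : x != -oo%E -> y != -oo%E -> (x + y)%E != -oo%E.
Proof. by case: x => [x| |]; case: y. Qed.

Lemma aw_nninf e : arc_weight v S e != -oo%E.
Proof. by case: e => ? ? /=; rewrite ?neglog_nninf. Qed.

Lemma sum_nninf (c : seq (earc n)) : (\sum_(e <- c) arc_weight v S e)%E != -oo%E.
Proof.
elim: c => [|e c IH]; rewrite ?big_nil ?big_cons //.
move: (aw_nninf e) IH.
by case: (arc_weight v S e) => [x| |]; case: (\sum_(j <- c) arc_weight v S j)%E.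
Qed.

Lemma spans_exch a b : a \in S -> nrm2S v S (v a) != 1 -> spans v (exch S a b).
Proof.
move=> Ha Hn; apply/negPn/negP => Hs; case: (ker_lemma Hs) => y Hy H0.
move/eqP: Hn; apply; apply: (lev1 Hu Ha Hy) => i Hi Hia; apply: H0.
by rewrite /exch !inE Hi Hia orbT.
Qed.

Lemma path_swap (x x' y y' : earc n) s : tgt x = tgt x' -> src y = src y' ->
  path (@consecutive n) x (rcons s y) = path (@consecutive n) x' (rcons s y').
Proof.
move=> + Hy; elim: s x x' => [|z s IH] x x' Hx /=; rewrite /consecutive.
  by rewrite Hx Hy.
by rewrite Hx (IH z z).
Qed.

Lemma core u1 w1 u2 w2 (P Q : seq (earc n)) :
  is_cycle v indep S (FwdII u1 w1 :: P ++ FwdII u2 w2 :: Q) ->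
  (cweight v S (FwdII u1 w1 :: P ++ FwdII u2 w2 :: Q) <
     (- ln (fval R (size (FwdII u1 w1 :: P ++ FwdII u2 w2 :: Q))./2))%:E)%E ->
  (forall c', is_cycle v indep S c' -> ver c' \proper ver (FwdII u1 w1 :: P ++ FwdII u2 w2 :: Q) ->
     ~ f_violating v indep S c') -> False.
Proof.
set C := (FwdII u1 w1 :: P ++ FwdII u2 w2 :: Q).
move=> Hcyc Hw Hmin.
move: (Hcyc) => /and4P [_ Hall Hcy Hun].
move: Hall; rewrite /= all_cat /= => /and3P [/and3P [Hu1 Hw1 _] HallP /andP [/and3P [Hu2 Hw2 _] HallQ]].
have Ew : cweight v S C = (arc_weight v S (FwdII u1 w1) + ((\sum_(e <- P) arc_weight v S e) +
   (arc_weight v S (FwdII u2 w2) + (\sum_(e <- Q) arc_weight v S e))))%E.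
  by rewrite /cweight /C big_cons big_cat big_cons.
have HsP : (\sum_(e <- P) arc_weight v S e)%E != -oo%E by apply: sum_nninf.
have HsQ : (\sum_(e <- Q) arc_weight v S e)%E != -oo%E by apply: sum_nninf.
have Hn1 : nrm2S v S (v w1) != 1.
  apply/eqP => H; move: Hw; rewrite Ew /= H subrr mulr0 sqrtr0 (neglog_le0 (lexx 0)).
  rewrite addye ?ltNge ?leey //.
  by apply: adde_nninf => //; apply: adde_nninf => //; apply: neglog_nninf.
have Hn2 : nrm2S v S (v w2) != 1.
  apply/eqP => H; move: Hw; rewrite Ew /= H subrr mulr0 sqrtr0 (neglog_le0 (lexx 0)).
  rewrite addye // addey // addey ?ltNge ?leey //.
  by apply: neglog_nninf.
move: Hcy; rewrite /C /= rcons_cat cat_path /= => /and3P [HcP HcM HcQ].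
move: Hun; rewrite /C /= map_cat /= mem_cat in_cons cat_uniq /= negb_or.
rewrite negb_or => /and5P [/and3P [H1P H12 H1Q] HuP /norP [H2P _] H2Q HuQ].
have Hc1 : is_cycle v indep S (FwdII u1 w2 :: Q).
  rewrite /is_cycle /= Hu1 Hw2 spans_exch // HallQ /= H1Q HuQ !andbT.
  by rewrite (path_swap (FwdII u1 w2) (FwdII u2 w2) (FwdII u1 w2) (FwdII u1 w1) Q erefl erefl).
have Hc2 : is_cycle v indep S (FwdII u2 w1 :: P).
  rewrite /is_cycle /= Hu2 Hw1 spans_exch // HallP /= H2P HuP !andbT.
  by rewrite (path_swap (FwdII u2 w1) (FwdII u1 w1) (FwdII u2 w1) (FwdII u2 w2) P erefl erefl) rcons_path HcP.
have Hp1 : ver (FwdII u1 w2 :: Q) \proper ver C.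
  apply/properP; split.
    apply/subsetP => x; rewrite /ver !in_set /C !map_cons map_cat !map_cons !in_cons mem_cat !in_cons.
    by case/orP => [->|->] //; rewrite !orbT.
  exists u2; rewrite /ver !in_set /C !map_cons ?map_cat ?map_cons !in_cons ?mem_cat ?in_cons ?eqxx ?orbT //.
  by rewrite negb_or eq_sym H12 H2Q.
have Hp2 : ver (FwdII u2 w1 :: P) \proper ver C.
  apply/properP; split.
    apply/subsetP => x; rewrite /ver !in_set /C !map_cons map_cat !map_cons !in_cons mem_cat !in_cons.
    by case/orP => [->|->] //; rewrite !orbT.
  exists u1; rewrite /ver !in_set /C !map_cons ?map_cat ?map_cons !in_cons ?mem_cat ?in_cons ?eqxx ?orbT //.
  by rewrite negb_or H12 H1P.
have Hp x : 0 < 1 + nrm2S v S x.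
  by rewrite (lt_le_trans ltr01) // lerDl nrm2S_ge0.
have Esum : (cweight v S (FwdII u1 w2 :: Q) + cweight v S (FwdII u2 w1 :: P))%E = cweight v S C.
  rewrite Ew /cweight !big_cons; apply: rearr; apply: swap_id; apply: Hp.
have H1 : ((- ln (fval R (size (FwdII u1 w2 :: Q))./2))%:E <= cweight v S (FwdII u1 w2 :: Q))%E.
  by rewrite leNgt; apply/negP => Hlt; exact: (Hmin _ Hc1 Hp1 (conj Hc1 Hlt)).
have H2 : ((- ln (fval R (size (FwdII u2 w1 :: P))./2))%:E <= cweight v S (FwdII u2 w1 :: P))%E.
  by rewrite leNgt; apply/negP => Hlt; exact: (Hmin _ Hc2 Hp2 (conj Hc2 Hlt)).
apply: (@final_contra R _ _ _ _ ((size C)./2) _ H1 H2); last by rewrite Esum.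
have -> : size C = (size (FwdII u1 w2 :: Q) + size (FwdII u2 w1 :: P))%N.
  by rewrite /C /= size_cat /= [RHS]addnC.
by rewrite halfD leq_addl.
Qed.
End Core.

Set Implicit Arguments.
Lemma split1 (T : Type) (p : pred T) (s : seq T) : (0 < count p s)%N ->
  exists A x B, s = A ++ x :: B /\ p x.
Proof.
elim: s => //= z s IH; case Hz: (p z) => H.
  by exists [::], z, s.
have [A [x [B [-> Hx]]]] := IH H.
by exists (z :: A), x, B.
Qed.

Lemma split2 (T : Type) (p : pred T) (s : seq T) : (1 < count p s)%N ->
  exists A x B y D, s = A ++ x :: B ++ y :: D /\ p x /\ p y.
Proof.
elim: s => //= z s IH; case Hz: (p z) => H.
  have [B [y [D [-> Hy]]]] := split1 (H : (0 < count p s)%N).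
  by exists [::], z, B, y, D.
have [A [x [B [y [D [-> [Hx Hy]]]]]]] := IH H.
by exists (z :: A), x, B, y, D.
Qed.

Lemma is_cycle_rot (R : realType) (d n : nat) (v : 'I_n -> 'cV[R]_d)
  (indep : {set 'I_n} -> bool) (S : {set 'I_n}) (A X : seq (earc n)) :
  is_cycle v indep S (A ++ X) -> is_cycle v indep S (X ++ A).
Proof.
rewrite /is_cycle !size_cat !all_cat !map_cat => /and4P [H0 Hall Hcy Hu].
apply/and4P; split.
- by rewrite addnC.
- by rewrite andbC.
- by rewrite -rot_size_cat rot_cycle.
- by rewrite uniq_catC.
Qed.

Lemma cweight_catC (R : realType) (d n : nat) (v : 'I_n -> 'cV[R]_d)
  (S : {set 'I_n}) (A X : seq (earc n)) :
  cweight v S (X ++ A) = cweight v S (A ++ X).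
Proof. by rewrite /cweight !big_cat; exact: addeC. Qed.

Theorem mainTheorem5 (R : realType) (d n : nat) (v : 'I_n -> 'cV[R]_d)
  (indep : {set 'I_n} -> bool) (S : {set 'I_n}) (C : seq (earc n)) :
  is_matroid indep ->
  is_basis indep S ->
  0 < \det (gram v S) ->
  min_f_violating v indep S C ->
  (count (@is_typeII n) C <= 1)%N.
Proof.
move=> _ _ Hdet [[Hcyc Hw] Hmin].
have Hu : gram v S \in unitmx by rewrite unitmxE unitfE gt_eqF.
rewrite leqNgt; apply/negP => /split2 [A [x [B [y [D [HC [Hx Hy]]]]]]].
case: x Hx HC => // u1 w1 _; case: y Hy => // u2 w2 _ HC; subst C.
set X := FwdII u1 w1 :: B ++ FwdII u2 w2 :: D.
have E1 : X ++ A = FwdII u1 w1 :: B ++ FwdII u2 w2 :: (D ++ A).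
  by rewrite /X /= -catA.
have Hver : ver (X ++ A) = ver (A ++ X).
  by apply/setP => z; rewrite !in_set !map_cat !mem_cat orbC.
apply: (@core R d n v indep S Hu u1 w1 u2 w2 B (D ++ A)); rewrite -E1.
- exact: is_cycle_rot.
- by rewrite cweight_catC size_cat addnC -size_cat.
- by move=> c' Hc' Hp; apply: Hmin => //; rewrite -Hver.
Qed.
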